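(* Drop the abundance condition and assume instead only $\mu\ge1/n(\boldsymbol h)$. Then for every $\boldsymbol m\in[0,1]^2$ there is an equilibrium, and every equilibrium maximizes total output over feasible allocations. Moreover: (a) If $\boldsymbol m\in R_s\cup R_t$ or $\boldsymbol m\in R_b\cap K$, then the following is an equilibrium: $r^*=F(\boldsymbol m)$, $w^*=\max\{\bar w_s,\bar w_b,\bar w_t\}$, and the allocation is $\alpha_s^*=1,\mu_s^*=\mu$ if $\boldsymbol m\in R_s$; $\alpha_b^*=1,\mu_b^*=n(\boldsymbol m),\mu_s^*=\mu-n(\boldsymbol m)$ if $\boldsymbol m\in R_b\cap K$; $\alpha_t^*=1,\mu_t^*=1/n(\boldsymbol h),\mu_s^*=\mu-1/n(\boldsymbol h)$ if $\boldsymbol m\in R_t$. (b) If $\boldsymbol m\in R_b\cap K^c\cap R_m$, then only $b$ and $t$ firms form: $\alpha_b^*+\alpha_t^*=1$, $\mu_b^*+\mu_t^*=\mu$ with $\mu_b^*=\alpha_b^*n(\boldsymbol m)$, $\mu_t^*=\alpha_t^*/n(\boldsymbol h)$, and the prices are $r^*=F(\boldsymbol m)+\frac{n(\boldsymbol h)(\bar w_b-\bar w_t)}{n(\boldsymbol m)n(\boldsymbol h)-1}$, $w^*=\bar w_b-\frac{n(\boldsymbol m)n(\boldsymbol h)(\bar w_b-\bar w_t)}{n(\boldsymbol m)n(\boldsymbol h)-1}$. (c) If $\boldsymbol m\in R_b\cap K^c\cap R_m^c$, then only $b$ and single-layer non-automated firms form: $\alpha_b^*=\mu/n(\boldsymbol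 m)$, $\alpha_s^*=1-\alpha_b^*$, $\mu_b^*=\mu$, with prices $r^*=F(\boldsymbol m\vee\boldsymbol h)-F(\boldsymbol h)/n(\boldsymbol m)$ and $w^*=F(\boldsymbol h)$.
   Context: Fix a cumulative distribution function $F$ on $[0,1]^2$ with a density $f$ that has full support on $[0,1]^2$; a problem $\boldsymbol x$ is drawn from $F$. Fix $c\in(0,1)$, human knowledge $\boldsymbol h\in(0,1)^2$ (unit mass of humans, one unit of time each), and a mass $\mu>0$ of machines with common knowledge $\boldsymbol m\in[0,1]^2$ (one unit of time each). Write $\boldsymbol x\vee\boldsymbol y$ for the componentwise maximum and, for $F(\boldsymbol x)<1$, $n(\boldsymbol x)=\frac{1}{c(1-F(\boldsymbol x))}$. Given wage $w\ge0$ and rental rate $r\ge0$, firm types and profits: single-layer non-automated $F(\boldsymbol h)-w$; single-layer automated $F(\boldsymbol m)-r$; bottom-automated $b$ (one human solver, $n(\boldsymbol m)$ machine workers; available only when $F(\boldsymbol m)<1$) $\Pi_b=n(\boldsymbol m)[F(\boldsymbol m\vee\boldsymbol h)-r]-w$; top-automated $t$ (one machine solver, $n(\boldsymbol h)$ human workers) $\Pi_t=n(\boldsymbol h)[F(\boldsymbol m\vee\boldsymbol h)-w]-r$. A feasible allocation is $(\alpha_s,\alpha_b,\alpha_t,\mu_s,\mu_b,\mu_t)\ge0$ with $\mu_b=\alpha_bn(\boldsymbol m)$, $\mu_t=\alpha_t/n(\boldsymbol h)$, $\alpha_s+\alpha_b+\alpha_t=1$, $\mu_s+\mu_b+\mu_t=\mu$;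 total output $Y=\alpha_bn(\boldsymbol m)F(\boldsymbol m\vee\boldsymbol h)+\alpha_tF(\boldsymbol m\vee\boldsymbol h)+\alpha_sF(\boldsymbol h)+\mu_sF(\boldsymbol m)$. An equilibrium is a feasible allocation and prices $(w,r)\ge0$ such that all firm types have nonpositive profit and types used with positive mass earn zero profit. Define $\bar w_s=F(\boldsymbol h)$, $\bar w_b=n(\boldsymbol m)(F(\boldsymbol m\vee\boldsymbol h)-F(\boldsymbol m))$ (with $\bar w_b:=0$ if $F(\boldsymbol m)=1$), $\bar w_t=F(\boldsymbol m\vee\boldsymbol h)-F(\boldsymbol m)/n(\boldsymbol h)$; $R_s=\{\boldsymbol m:\bar w_s\ge\max\{\bar w_b,\bar w_t\}\}$, $R_b=\{\boldsymbol m:\bar w_b>\max\{\bar w_s,\bar w_t\}\}$, $R_t=[0,1]^2\setminus(R_s\cup R_b)$; $K=\{\boldsymbol m\in[0,1]^2:F(\boldsymbol m)<1,\ \mu\ge n(\boldsymbol m)\}$; $R_m=\{\boldsymbol m\in[0,1]^2:\bar w_b-\bar w_s\le n(\boldsymbol m)n(\boldsymbol h)(\bar w_t-\bar w_s)\}$. Complements are taken in $[0,1]^2$. *)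

(* Defs.v *)
From HB Require Import structures.
From mathcomp Require Import all_boot all_order all_algebra.
From mathcomp Require Import all_classical all_reals all_analysis.
Set Implicit Arguments. Unset Strict Implicit. Unset Printing Implicit Defensive.
Import Order.TTheory GRing.Theory Num.Theory.
Import numFieldNormedType.Exports.
Local Open Scope classical_set_scope.
Local Open Scope ring_scope.

Section Defs.
Variable R : realType.

Definition unit_sq : set (R * R) := `[0%R, 1%R] `*` `[0%R, 1%R].

Definition leb2 := ((@lebesgue_measure R) \x (@lebesgue_measure R))%E.

Definition full_support_density (f : R * R -> R) : Prop :=
  [/\ measurable_fun unit_sq f,
      (forall z, z \in unit_sq -> 0 <= f z),
      (\int[leb2]_(z in unit_sq) (f z)%:E = 1)%E &
      (forall z e, z \in unit_sq -> 0 < e ->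
         (0 < \int[leb2]_(y in unit_sq `&` ball z e) (f y)%:E)%E) ].

Definition cdf2 (f : R * R -> R) (x : R * R) : R :=
  fine (\int[leb2]_(z in `[0%R, x.1] `*` `[0%R, x.2]) (f z)%:E).

Definition vjoin (x y : R * R) : R * R := (Num.max x.1 y.1, Num.max x.2 y.2).

Record alloc := Alloc {
  al_s : R; al_b : R; al_t : R; mu_s : R; mu_b : R; mu_t : R }.

Variables (F : R * R -> R) (c : R) (h : R * R) (mu : R).

(* n(x) = 1 / (c (1 - F x)) ; only meaningful when F x < 1 *)
Definition nn (x : R * R) : R := (c * (1 - F x))^-1.

Variable m : R * R.

Definition profit_s (w : R) := F h - w.
Definition profit_a (r : R) := F m - r.
Definition profit_b (w r : R) := nn m * (F (vjoin m h) - r) - w.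
Definition profit_t (w r : R) := nn h * (F (vjoin m h) - w) - r.

(* the bottom-automated type is available only when F m < 1 *)
Definition feasible (a : alloc) : Prop :=
  [/\ [/\ 0 <= al_s a, 0 <= al_b a & 0 <= al_t a],
      [/\ 0 <= mu_s a, 0 <= mu_b a & 0 <= mu_t a],
      mu_b a = al_b a * nn m /\ mu_t a = al_t a / nn h,
      al_s a + al_b a + al_t a = 1 /\ mu_s a + mu_b a + mu_t a = mu &
      (0 < al_b a -> F m < 1) ].

Definition output (a : alloc) : R :=
  al_b a * nn m * F (vjoin m h) + al_t a * F (vjoin m h)
  + al_s a * F h + mu_s a * F m.

Definition equilibrium (a : alloc) (w r : R) : Prop :=
  [/\ feasible a, 0 <= w, 0 <= r,
      [/\ profit_s w <= 0, profit_a r <= 0,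
          (F m < 1 -> profit_b w r <= 0) & profit_t w r <= 0] &
      [/\ (0 < al_s a -> profit_s w = 0), (0 < mu_s a -> profit_a r = 0),
          (0 < al_b a -> profit_b w r = 0) & (0 < al_t a -> profit_t w r = 0)] ].

Definition output_max (a : alloc) : Prop :=
  feasible a /\ forall a', feasible a' -> output a' <= output a.

Definition wbar_s := F h.
Definition wbar_b := if F m < 1 then nn m * (F (vjoin m h) - F m) else 0.
Definition wbar_t := F (vjoin m h) - F m / nn h.

Definition in_Rs := Num.max wbar_b wbar_t <= wbar_s.
Definition in_Rb := Num.max wbar_s wbar_t < wbar_b.
Definition in_Rt := ~ in_Rs /\ ~ in_Rb.
Definition in_K := F m < 1 /\ nn m <= mu.
Definition in_Rm := wbar_b - wbar_s <= nn m * nn h * (wbar_t - wbar_s).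

End Defs.
Arguments unit_sq {R}.

(* Main.v *)
Require Import Defs.
From HB Require Import structures.
From mathcomp Require Import all_boot all_order all_algebra.
From mathcomp Require Import all_classical all_reals all_analysis.
From mathcomp Require Import ring lra measurable_realfun.
Import Order.TTheory GRing.Theory Num.Theory.
Import numFieldNormedType.Exports.
Local Open Scope classical_set_scope.
Local Open Scope ring_scope.

Section S.
Variable R : realType.
Lemma unit_sqP (z : R*R) : z \in unit_sq <-> (0 <= z.1 <= 1) /\ (0 <= z.2 <= 1).
Proof. by rewrite in_setE /unit_sq /= !in_itv. Qed.

Lemma F_ge0 (f : R * R -> R) x : full_support_density f -> x \in unit_sq -> 0 <= cdf2 f x.
Proof.
case=> _ f0 _ _ /unit_sqP [/andP[x10 x11] /andP[x20 x21]].
rewrite /cdf2; apply: fine_ge0; apply: integral_ge0 => z [/= z1 z2].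
rewrite lee_fin; apply: f0; apply/unit_sqP.
move: z1 z2; rewrite !in_itv /= => /andP[? ?] /andP[? ?].
split; apply/andP; split => //; apply: le_trans; eassumption.
Qed.

Lemma mes_unit_sq : measurable (@unit_sq R).
Proof. by apply: measurableX; exact: measurable_itv. Qed.
Lemma F_lt1 (f : R * R -> R) (h : R * R) : full_support_density f ->
  (0 < h.1 < 1) /\ (0 < h.2 < 1) -> cdf2 f h < 1.
Proof.
move=> fd; have [mf f0 i1 fpos] := fd.
move=> [/andP[h10 h11] /andP[h20 h21]].
set A := `[0, h.1] `*` `[0, h.2].
set e := Num.min (1 - h.1) (1 - h.2).
have e0 : 0 < e by rewrite lt_min !subr_gt0 h11 h21.
set B := unit_sq `&` ball ((1:R), (1:R)) e.
have mA : measurable A by apply: measurableX; exact: measurable_itv.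
have mB : measurable B.
  apply: measurableI; first exact: mes_unit_sq.
  apply: measurableX; by rewrite ball_itv; exact: measurable_itv.
have AU : A `<=` unit_sq.
  move=> z [/= z1 z2]; rewrite -in_setE; apply/unit_sqP.
  move: z1 z2; rewrite !in_itv /= => /andP[? ?] /andP[? ?].
  by split; apply/andP; split; lra.
have ABU : A `|` B `<=` unit_sq by move=> z [/AU //|[]].
have dAB : [disjoint A & B].
  apply/disj_setPS => z [[/= z1 z2] [_ [/= b1 b2]]].
  move: z1 b1; rewrite in_itv /= /ball /= ltr_distlC => /andP[_ zh] /andP[? ?].
  have : e <= 1 - h.1 by rewrite ge_min lexx.
  move=> ?; suff : h.1 < h.1 by rewrite ltxx.
  lra.
have mg : measurable_fun unit_sq (fun z => (f z)%:E) by apply/measurable_EFinP.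
have g0 : forall z, unit_sq z -> (0 <= (f z)%:E)%E by move=> z uz; rewrite lee_fin f0 // in_setE.
have h1 : (\int[@leb2 R]_(z in A `|` B) (f z)%:E <= 1)%E.
  rewrite -i1; apply: ge0_subset_integral => //; first exact: measurableU.
  exact: mes_unit_sq.
rewrite ge0_integral_setU // in h1; last 2 first.
- exact: measurable_funS mes_unit_sq ABU mg.
- by move=> z /ABU; apply: g0.
have hB : (0 < \int[@leb2 R]_(z in B) (f z)%:E)%E.
  apply: fpos => //; apply/unit_sqP => /=; rewrite ler01 lexx; done.
have hA : (0 <= \int[@leb2 R]_(z in A) (f z)%:E)%E.
  by apply: integral_ge0 => z /AU; apply: g0.
rewrite /cdf2 -/A.
move: h1 hB hA; case: (\int[@leb2 R]_(z in A) (f z)%:E)%E => [a||];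
  case: (\int[@leb2 R]_(z in B) (f z)%:E)%E => [b||] //=.
rewrite !lee_fin !lte_fin => ? ? ?; lra.
Qed.
End S.

Section Alg.
Variables (R : realType) (F : R * R -> R) (c mu : R) (h m : R * R).
Hypotheses (c0 : 0 < c) (Fh0 : 0 <= F h) (Fh1 : F h < 1) (mu0 : 0 < mu)
  (muh : (nn F c h)^-1 <= mu) (Fm0 : 0 <= F m).

Local Notation nh := (nn F c h).
Local Notation nm := (nn F c m).
Local Notation Fv := (F (vjoin m h)).

Lemma nh_gt0 : 0 < nh.
Proof. by rewrite /nn invr_gt0 mulr_gt0 // subr_gt0. Qed.
Lemma nh_neq0 : nh != 0.
Proof. exact: lt0r_neq0 nh_gt0. Qed.
Lemma nm_gt0 : F m < 1 -> 0 < nm.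
Proof. by move=> H; rewrite /nn invr_gt0 mulr_gt0 // subr_gt0. Qed.

Lemma wbE : F m < 1 -> wbar_b F c h m = nm * (Fv - F m).
Proof. by move=> H; rewrite /wbar_b H. Qed.

Lemma profit_tE w r :
  profit_t F c h m w r = nh * (wbar_t F c h m - w) + (F m - r).
Proof. rewrite /profit_t /wbar_t; field; exact: nh_neq0. Qed.

Lemma profit_bE w r : F m < 1 ->
  profit_b F c h m w r = (wbar_b F c h m - w) + nm * (F m - r).
Proof. move=> H; rewrite wbE // /profit_b; ring. Qed.

Lemma le_output a w r : feasible F c h mu m a ->
  profit_s F h w <= 0 -> profit_a F m r <= 0 ->
  (F m < 1 -> profit_b F c h m w r <= 0) -> profit_t F c h m w r <= 0 ->
  output F c h m a <= w + mu * r.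
Proof.
move=> [[as0 ab0 at0] [ms0 mb0 mt0] [mbE mtE] [sa sm] abF] ps pa pb pt.
have e1 : 0 <= al_s a * (w - F h) by rewrite mulr_ge0 // subr_ge0 -subr_le0.
have e2 : 0 <= mu_s a * (r - F m) by rewrite mulr_ge0 // subr_ge0 -subr_le0.
have e3 : 0 <= al_b a * (w + nm * r - nm * Fv).
  move: ab0; rewrite le0r => /orP[/eqP->|abp]; first by rewrite mul0r.
  apply: mulr_ge0; first exact: ltW.
  have := pb (abF abp); rewrite /profit_b => H.
  have -> : w + nm * r - nm * Fv = - (nm * (Fv - r) - w) by ring.
  by rewrite oppr_ge0.
have e4 : 0 <= al_t a * (w + r / nh - Fv).
  apply: mulr_ge0 => //.
  have -> : w + r / nh - Fv = - profit_t F c h m w r / nh.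
    by rewrite /profit_t; field; exact: nh_neq0.
  apply: mulr_ge0; first by rewrite oppr_ge0.
  by rewrite invr_ge0 ltW // nh_gt0.
have sw : w = al_s a * w + al_b a * w + al_t a * w by rewrite -!mulrDl sa mul1r.
have sr : mu * r = mu_s a * r + al_b a * nm * r + al_t a / nh * r.
  by rewrite -sm mbE mtE !mulrDl.
rewrite /output; lra.
Qed.

Lemma slack (x y : R) : 0 <= x -> (0 < x -> y = 0) -> x * y = 0.
Proof. by rewrite le0r => /orP[/eqP->|/[swap]/[apply]->]; rewrite ?mul0r ?mulr0. Qed.

Lemma eq_output a w r : equilibrium F c h mu m a w r ->
  output F c h m a = w + mu * r.
Proof.
move=> [[[as0 ab0 at0] [ms0 mb0 mt0] [mbE mtE] [sa sm] abF] _ _ _ [ps pa pb pt]].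
have e1 := slack _ _ as0 ps; have e2 := slack _ _ ms0 pa; have e3 := slack _ _ ab0 pb.
have e4 := slack _ _ at0 pt.
rewrite /profit_s /profit_a /profit_b in e1 e2 e3.
have e4' : al_t a * (w + r / nh - Fv) = 0.
  have -> : w + r / nh - Fv = - profit_t F c h m w r / nh.
    by rewrite /profit_t; field; exact: nh_neq0.
  by rewrite mulNr mulrN mulrA e4 mul0r oppr0.
have sw : w = al_s a * w + al_b a * w + al_t a * w by rewrite -!mulrDl sa mul1r.
have sr : mu * r = mu_s a * r + al_b a * nm * r + al_t a / nh * r.
  by rewrite -sm mbE mtE !mulrDl.
rewrite /output; lra.
Qed.

Local Notation wb := (wbar_b F c h m).
Local Notation wt := (wbar_t F c h m).
Local Notation ws := (wbar_s F h).
Local Notation wmax := (Num.max (wbar_s F h) (Num.max (wbar_b F c h m) (wbar_t F c h m))).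

Lemma eq_Rs : in_Rs F c h m ->
  equilibrium F c h mu m (Alloc 1 0 0 mu 0 0) wmax (F m).
Proof.
rewrite /in_Rs ge_max => /andP[hb ht].
have -> : wmax = F h by rewrite max_l // ge_max hb ht.
split => //.
- have := ltW mu0; split => /=; [split|split|split|split|] => //; try (intros; lra).
- split.
  + by rewrite /profit_s subrr.
  + by rewrite /profit_a subrr.
  + move=> Fm1; rewrite profit_bE // subrr mulr0 addr0 subr_le0; exact: hb.
  + rewrite profit_tE subrr addr0 pmulr_rle0 ?nh_gt0 // subr_le0; exact: ht.
- split => /=.
  + by rewrite /profit_s subrr.
  + by rewrite /profit_a subrr.
  + by rewrite ltxx.
  + by rewrite ltxx.
Qed.

Lemma eq_RbK : in_Rb F c h m -> in_K F c mu m ->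
  equilibrium F c h mu m (Alloc 0 1 0 (mu - nm) nm 0) wmax (F m).
Proof.
rewrite /in_Rb gt_max => /andP[hs ht] [Fm1 Km].
have -> : wmax = wb by rewrite (max_l (ltW ht)) max_r // ltW.
have ws0 : 0 <= ws by [].
split => //.
- have := nm_gt0 Fm1; split => /=; [split|split|split|split|] => //; try (intros; lra).
- apply: ltW; exact: le_lt_trans hs.
- split.
  + rewrite /profit_s subr_le0; exact: ltW.
  + by rewrite /profit_a subrr.
  + by move=> _; rewrite profit_bE // !subrr mulr0 addr0.
  + rewrite profit_tE subrr addr0 pmulr_rle0 ?nh_gt0 // subr_le0; exact: ltW.
- split => /=.
  + by rewrite ltxx.
  + by rewrite /profit_a subrr.
  + by rewrite profit_bE // !subrr mulr0 addr0.
  + by rewrite ltxx.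
Qed.

Lemma eq_Rt : in_Rt F c h m ->
  equilibrium F c h mu m (Alloc 0 0 1 (mu - nh^-1) 0 nh^-1) wmax (F m).
Proof.
rewrite /in_Rt /in_Rs /in_Rb => -[/negP nRs /negP nRb].
move: nRs nRb; rewrite -ltNge -leNgt lt_max le_max => H1 H2.
have [hb hs] : wb <= wt /\ ws < wt.
  case/orP: H1 => H1; case/orP: H2 => H2.
  - by move: (lt_le_trans H1 H2); rewrite ltxx.
  - by split => //; exact: lt_le_trans H2.
  - by split => //; exact: le_trans (ltW H1).
  - by [].
have -> : wmax = wt by rewrite (max_r hb) max_r // ltW.
split => //.
- have := nh_gt0; rewrite -invr_gt0 => ?; have := muh; have := ltW mu0.
  split => /=; [split|split|split|split|] => //; try (intros; lra).
- apply: ltW; exact: le_lt_trans hs.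
- split.
  + rewrite /profit_s subr_le0; exact: ltW.
  + by rewrite /profit_a subrr.
  + by move=> Fm1; rewrite profit_bE // subrr mulr0 addr0 subr_le0.
  + by rewrite profit_tE !subrr mulr0 addr0.
- split => /=.
  + by rewrite ltxx.
  + by rewrite /profit_a subrr.
  + by rewrite ltxx.
  + by rewrite profit_tE !subrr mulr0 addr0.
Qed.

Lemma Rb_Fm1 : in_Rb F c h m -> F m < 1.
Proof.
rewrite /in_Rb gt_max => /andP[hs _]; move: hs; rewrite /wbar_b.
by case: ifP => // _; rewrite /wbar_s => H; have := le_lt_trans Fh0 H; rewrite ltxx.
Qed.

Lemma nK_lt : in_Rb F c h m -> ~ in_K F c mu m -> mu < nm.
Proof.
move=> /Rb_Fm1 Fm1 nK; rewrite ltNge; apply/negP => H; exact: nK.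
Qed.

Lemma eq_b : in_Rb F c h m -> ~ in_K F c mu m -> in_Rm F c h m ->
  exists a, [/\ al_s a = 0, mu_s a = 0 &
       equilibrium F c h mu m a
         (wb - nm * nh * (wb - wt) / (nm * nh - 1))
         (F m + nh * (wb - wt) / (nm * nh - 1))].
Proof.
move=> hRb nK hRm.
have Fm1 := Rb_Fm1 hRb; have mun := nK_lt hRb nK.
move: hRb; rewrite /in_Rb gt_max => /andP[hs ht].
have nhp := nh_gt0; have nmp := nm_gt0 Fm1.
have ihp : 0 < nh^-1 by rewrite invr_gt0.
have ihn : nh^-1 < nm by exact: le_lt_trans muh mun.
have Dp : 0 < nm * nh - 1.
  rewrite subr_gt0 -(mulVf nh_neq0) ltr_pM2r //.
have Dn : nm * nh - 1 != 0 by exact: lt0r_neq0.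
have dn : nm - nh^-1 != 0 by rewrite subr_eq0 gt_eqF.
set D := nm * nh - 1.
set ab := (mu - nh^-1) / (nm - nh^-1).
have ab0 : 0 <= ab by rewrite divr_ge0 // subr_ge0 // ltW.
have ab1 : ab <= 1 by rewrite ler_pdivrMr ?subr_gt0 // mul1r lerD2r ltW.
have hw : wb - nm * nh * (wb - wt) / D - F h =
          (nm * nh * (wt - ws) - (wb - ws)) / D.
  by rewrite /wbar_s /D; field.
have w_ge : F h <= wb - nm * nh * (wb - wt) / D.
  rewrite -subr_ge0 hw; apply: divr_ge0; last exact: ltW.
  by rewrite subr_ge0; exact: hRm.
have Del : 0 <= nh * (wb - wt) / D.
  apply: divr_ge0; last exact: ltW.
  by apply: mulr_ge0; [exact: ltW | rewrite subr_ge0; exact: ltW].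
have pb0 : profit_b F c h m (wb - nm * nh * (wb - wt) / D)
                 (F m + nh * (wb - wt) / D) = 0.
  by rewrite profit_bE //; ring.
have pt0 : profit_t F c h m (wb - nm * nh * (wb - wt) / D)
                 (F m + nh * (wb - wt) / D) = 0.
  rewrite profit_tE /D; field; exact: Dn.
exists (Alloc 0 ab (1 - ab) 0 (ab * nm) ((1 - ab) / nh)); split => //.
split.
- split => /=.
  + by split => //; rewrite subr_ge0.
  + split => //; first by apply: mulr_ge0 => //; exact: ltW.
    by apply: divr_ge0; [rewrite subr_ge0 | exact: ltW].
  + by [].
  + split; first by rewrite add0r addrC subrK.
    by rewrite /ab; field; rewrite nh_neq0 Dn.
  + by [].
- exact: le_trans w_ge.
- by rewrite addr_ge0.
- split.
  + by rewrite /profit_s subr_le0.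
  + by rewrite /profit_a subr_le0 lerDl.
  + by rewrite pb0.
  + by rewrite pt0.
- split => /=.
  + by rewrite ltxx.
  + by rewrite ltxx.
  + by [].
  + by [].
Qed.

Lemma eq_c : in_Rb F c h m -> ~ in_K F c mu m -> ~ in_Rm F c h m ->
  equilibrium F c h mu m (Alloc (1 - mu / nm) (mu / nm) 0 0 mu 0)
       (F h) (Fv - F h / nm).
Proof.
move=> hRb nK /negP; rewrite /in_Rm -ltNge => hRm.
have Fm1 := Rb_Fm1 hRb; have mun := nK_lt hRb nK.
move: hRb; rewrite /in_Rb gt_max => /andP[hs ht].
have nhp := nh_gt0; have nmp := nm_gt0 Fm1.
have nmn : nm != 0 by exact: lt0r_neq0.
have hr : Fv - F h / nm - F m = (wb - ws) / nm.
  by rewrite wbE // /ws /wbar_s; field.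
have r_gt : F m < Fv - F h / nm by rewrite -subr_gt0 hr divr_gt0 // subr_gt0.
have pt : profit_t F c h m (F h) (Fv - F h / nm) < 0.
  rewrite profit_tE.
  have -> : F m - (Fv - F h / nm) = - ((wb - ws) / nm) by rewrite -hr; lra.
  rewrite subr_lt0 ltr_pdivlMr //.
  move: hRm; rewrite /ws /wbar_s => H.
  by rewrite mulrC mulrA.
split.
- split => /=.
  + have q1 : mu / nm <= 1 by rewrite ler_pdivrMr // mul1r ltW.
    have q0 : 0 <= mu / nm by apply: divr_ge0; exact: ltW.
    by split => //; rewrite subr_ge0.
  + by split => //; rewrite ltW.
  + by split => //; rewrite ?divfK // mul0r.
  + by split; [rewrite addr0 subrK | rewrite add0r addr0].
  + by [].
- by [].
- exact: le_trans (ltW r_gt).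
- split.
  + by rewrite /profit_s subrr.
  + by rewrite /profit_a subr_le0 ltW.
  + by move=> _; rewrite /profit_b; have -> : nm * (Fv - (Fv - F h / nm)) - F h = 0 by field.
  + exact: ltW.
- split => /=.
  + by rewrite /profit_s subrr.
  + by rewrite ltxx.
  + by move=> _; rewrite /profit_b; field.
  + by rewrite ltxx.
Qed.


Lemma exists_eq : exists a w r, equilibrium F c h mu m a w r.
Proof.
case Hs: (Num.max wb wt <= ws).
  by do 3 eexists; apply: eq_Rs; rewrite /in_Rs Hs.
case Hb: (Num.max ws wt < wb); last first.
  by do 3 eexists; apply: eq_Rt; split; rewrite /in_Rs /in_Rb ?Hs ?Hb.
have hRb : in_Rb F c h m by rewrite /in_Rb Hb.
have Fm1 := Rb_Fm1 hRb.
case K1: (nm <= mu).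
  by do 3 eexists; apply: eq_RbK => //; split.
have nK : ~ in_K F c mu m by case=> _; rewrite K1.
case Hm: (wb - ws <= nm * nh * (wt - ws)).
  have [a [_ _ He]] := eq_b hRb nK (Hm : in_Rm F c h m).
  by exists a; do 2 eexists; exact: He.
by do 3 eexists; apply: eq_c => //; rewrite /in_Rm Hm.
Qed.

Lemma eq_max a w r : equilibrium F c h mu m a w r -> output_max F c h mu m a.
Proof.
move=> He; split; first by case: He.
move=> a' fa'; rewrite (eq_output _ _ _ He).
by case: He => _ _ _ [ps pa pb pt] _; apply: le_output.
Qed.

Lemma parts :
  (exists a w r, equilibrium F c h mu m a w r) /\
  (forall a w r, equilibrium F c h mu m a w r -> output_max F c h mu m a) /\
  (in_Rs F c h m -> equilibrium F c h mu m (Alloc 1 0 0 mu 0 0) wmax (F m)) /\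
  (in_Rb F c h m -> in_K F c mu m ->
     equilibrium F c h mu m (Alloc 0 1 0 (mu - nm) nm 0) wmax (F m)) /\
  (in_Rt F c h m -> equilibrium F c h mu m
       (Alloc 0 0 1 (mu - nh^-1) 0 nh^-1) wmax (F m)) /\
  (in_Rb F c h m -> ~ in_K F c mu m -> in_Rm F c h m ->
     exists a, [/\ al_s a = 0, mu_s a = 0 &
       equilibrium F c h mu m a
         (wb - nm * nh * (wb - wt) / (nm * nh - 1))
         (F m + nh * (wb - wt) / (nm * nh - 1))]) /\
  (in_Rb F c h m -> ~ in_K F c mu m -> ~ in_Rm F c h m ->
     equilibrium F c h mu m (Alloc (1 - mu / nm) (mu / nm) 0 0 mu 0)
       (F h) (Fv - F h / nm)).
Proof.
split; first exact: exists_eq.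
split; first by move=> *; apply: eq_max; eassumption.
split; first exact: eq_Rs.
split; first exact: eq_RbK.
split; first exact: eq_Rt.
split; first exact: eq_b.
exact: eq_c.
Qed.

End Alg.

Theorem proposition5 (R : realType) (f : R * R -> R) (c mu : R) (h : R * R) :
  full_support_density f ->
  0 < c < 1 ->
  (0 < h.1 < 1) /\ (0 < h.2 < 1) ->
  0 < mu ->
  (nn (cdf2 f) c h)^-1 <= mu ->
  let F := cdf2 f in
  let wmax m := Num.max (wbar_s F h)
                  (Num.max (wbar_b F c h m) (wbar_t F c h m)) in
  (* existence of an equilibrium *)
  (forall m : R * R, m \in unit_sq ->
     exists a w r, equilibrium F c h mu m a w r) /\
  (* every equilibrium maximizes total output *)
  (forall (m : R * R) a w r, m \in unit_sq ->
     equilibrium F c h mu m a w r -> output_max F c h mu m a) /\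
  (* (a) *)
  (forall m : R * R, m \in unit_sq -> in_Rs F c h m ->
     equilibrium F c h mu m (Alloc 1 0 0 mu 0 0) (wmax m) (F m)) /\
  (forall m : R * R, m \in unit_sq -> in_Rb F c h m -> in_K F c mu m ->
     equilibrium F c h mu m (Alloc 0 1 0 (mu - nn F c m) (nn F c m) 0)
       (wmax m) (F m)) /\
  (forall m : R * R, m \in unit_sq -> in_Rt F c h m ->
     equilibrium F c h mu m
       (Alloc 0 0 1 (mu - (nn F c h)^-1) 0 (nn F c h)^-1)
       (wmax m) (F m)) /\
  (* (b) *)
  (forall m : R * R, m \in unit_sq -> in_Rb F c h m -> ~ in_K F c mu m ->
     in_Rm F c h m ->
     let D := nn F c m * nn F c h - 1 in
     exists a, [/\ al_s a = 0, mu_s a = 0 &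
       equilibrium F c h mu m a
         (wbar_b F c h m - nn F c m * nn F c h
                           * (wbar_b F c h m - wbar_t F c h m) / D)
         (F m + nn F c h * (wbar_b F c h m - wbar_t F c h m) / D)]) /\
  (* (c) *)
  (forall m : R * R, m \in unit_sq -> in_Rb F c h m -> ~ in_K F c mu m ->
     ~ in_Rm F c h m ->
     equilibrium F c h mu m
       (Alloc (1 - mu / nn F c m) (mu / nn F c m) 0 0 mu 0)
       (F h) (F (vjoin m h) - F h / nn F c m)).
Proof.
move=> Hf /andP[c0 c1] Hh mu0 muh F wmax.
have hU : h \in unit_sq.
  case: Hh => /andP[? ?] /andP[? ?]; apply/unit_sqP.
  by split; apply/andP; split; apply: ltW.
have Fh0 : 0 <= F h := @F_ge0 R f h Hf hU.
have Fh1 : F h < 1 := @F_lt1 R f h Hf Hh.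
have P m (hm : m \in unit_sq) := @parts R F c mu h m c0 Fh0 Fh1 mu0 muh (@F_ge0 R f m Hf hm).
split; first by move=> m hm; case: (P m hm).
split; first by move=> m a w r hm; case: (P m hm) => _ [H _]; exact: H.
split; first by move=> m hm; case: (P m hm) => _ [_ [H _]]; exact: H.
split; first by move=> m hm; case: (P m hm) => _ [_ [_ [H _]]]; exact: H.
split; first by move=> m hm; case: (P m hm) => _ [_ [_ [_ [H _]]]]; exact: H.
split; first by move=> m hm; case: (P m hm) => _ [_ [_ [_ [_ [H _]]]]]; exact: H.
by move=> m hm; case: (P m hm) => _ [_ [_ [_ [_ [_ H]]]]]; exact: H.
Qed.
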